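(* Let $f:[a,b]\to\mathbb{Q}_Q(\mathbb{R}^n)$ be continuous, let $x_0\in(a,b)$, and suppose $f$ is strongly affinely approximatable at $x_0$. Then there exist continuous functions $f_1,\dots,f_Q:[a,b]\to\mathbb{R}^n$ such that $f(x)=\sum_{i=1}^Q[[f_i(x)]]$ for all $x\in[a,b]$ and each $f_i$ is differentiable at $x_0$.
   Context: $\mathbb{Q}_Q(\mathbb{R}^n)$ denotes the set of unordered $Q$-tuples $\sum_{i=1}^Q[[a_i]]$ of points of $\mathbb{R}^n$ (two such sums are equal iff the tuples agree up to a permutation), with metric $\mathcal{G}\big(\sum_i[[a_i]],\sum_i[[b_i]]\big)=\min_{\sigma}\big(\sum_{i}|a_i-b_{\sigma(i)}|^2\big)^{1/2}$ over permutations $\sigma$. A function $f:[a,b]\to\mathbb{Q}_Q(\mathbb{R}^n)$ is affinely approximatable at $x_0$ if there are affine maps $A_1,\dots,A_Q:\mathbb{R}\to\mathbb{R}^n$ with $\lim_{x\to x_0}\mathcal{G}\big(f(x),\sum_{i=1}^Q[[A_i(x)]]\big)/|x-x_0|=0$; it is strongly affinely approximatable at $x_0$ if moreover these maps can be chosen so that $A_i=A_j$ whenever $A_i(x_0)=A_j(x_0)$. *)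

(* Defs.v *)
From HB Require Import structures.
From mathcomp Require Import all_boot all_order all_algebra all_fingroup.
From mathcomp Require Import all_classical all_reals all_analysis.
Set Implicit Arguments. Unset Strict Implicit. Unset Printing Implicit Defensive.
Import Order.TTheory GRing.Theory Num.Theory.
Import numFieldNormedType.Exports.
Local Open Scope ring_scope.
Local Open Scope classical_set_scope.

(* An ordered representative of a point of Q_Q(R^n): a Q-tuple of row
   vectors.  Two representatives denote the same unordered Q-tuple iff
   they differ by a permutation of the indices ('S_Q). *)
Definition Qtuple (R : realType) (Q n : nat) := 'I_Q -> 'rV[R]_n.

Definition sqdist (R : realType) (n : nat) (u v : 'rV[R]_n) : R :=
  \sum_(j < n) (u 0 j - v 0 j) ^+ 2.

Definition Gsq (R : realType) (Q n : nat) (p q : Qtuple R Q n) (s : 'S_Q) : R :=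
  \sum_(i < Q) sqdist (p i) (q (s i)).

Definition Gdist (R : realType) (Q n : nat) (p q : Qtuple R Q n) : R :=
  Num.sqrt (\big[Num.min/Gsq p q 1%g]_(s : 'S_Q) Gsq p q s).

Definition Qcontinuous_on (R : realType) (Q n : nat) (a b : R)
    (f : R -> Qtuple R Q n) : Prop :=
  forall x, a <= x <= b -> forall e : R, 0 < e -> exists2 d : R, 0 < d &
    forall y, a <= y <= b -> `|y - x| < d -> Gdist (f y) (f x) < e.

Definition affine_map (R : realType) (n : nat) (A : R -> 'rV[R]_n) : Prop :=
  exists c v : 'rV[R]_n, forall x, A x = c + x *: v.

Definition approximates_at (R : realType) (Q n : nat) (a b : R)
    (f : R -> Qtuple R Q n) (x0 : R) (A : 'I_Q -> R -> 'rV[R]_n) : Prop :=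
  forall e : R, 0 < e -> exists2 d : R, 0 < d &
    forall x, a <= x <= b -> 0 < `|x - x0| < d ->
      Gdist (f x) (fun i => A i x) / `|x - x0| < e.

Definition affinely_approximatable (R : realType) (Q n : nat) (a b : R)
    (f : R -> Qtuple R Q n) (x0 : R) : Prop :=
  exists A : 'I_Q -> R -> 'rV[R]_n,
    (forall i, affine_map (A i)) /\ approximates_at a b f x0 A.

Definition strongly_affinely_approximatable (R : realType) (Q n : nat) (a b : R)
    (f : R -> Qtuple R Q n) (x0 : R) : Prop :=
  exists A : 'I_Q -> R -> 'rV[R]_n,
    [/\ forall i, affine_map (A i),
        approximates_at a b f x0 A &
        forall i j, A i x0 = A j x0 -> A i = A j].

(* Main.v *)
Require Import Defs.
From HB Require Import structures.
From mathcomp Require Import all_boot all_order all_algebra all_fingroup.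
From mathcomp Require Import all_classical all_reals all_analysis.
From mathcomp Require Import lra.
Import Order.TTheory GRing.Theory Num.Theory.
Import numFieldNormedType.Exports.
Local Open Scope ring_scope.
Local Open Scope classical_set_scope.

Set Implicit Arguments. Unset Strict Implicit. Unset Printing Implicit Defensive.

Section SelDefs.
Variables (R : realType) (I : finType) (n : nat).
Local Notation V := 'rV[R]_n.

Definition bp (blk : I -> seq bool) (s : {perm I}) := forall i, blk (s i) = blk i.

Definition nearb blk (p q : I -> V) (e : R) :=
  exists2 s, bp blk s & forall i, `|p i - q (s i)| < e.

Definition MCb blk (J : set R) (f : R -> I -> V) :=
  forall x, J x -> forall e, 0 < e -> exists2 d, 0 < d &
    forall y, J y -> `|y - x| < d -> nearb blk (f y) (f x) e.

Definition Sel blk (J : set R) (f : R -> I -> V) (F : R -> I -> V) :=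
  (forall x, J x -> exists2 s, bp blk s & forall i, F x i = f x (s i)) /\
  (forall i x, J x -> forall e, 0 < e -> exists2 d, 0 < d &
    forall y, J y -> `|y - x| < d -> `|F y i - F x i| < e).

Lemma bp1 blk : bp blk 1%g.
Proof. by move=> i; rewrite perm1. Qed.

Lemma bpM blk s t : bp blk s -> bp blk t -> bp blk (s * t)%g.
Proof. by move=> hs ht i; rewrite permM ht hs. Qed.

Lemma bpV blk s : bp blk s -> bp blk (s^-1)%g.
Proof. by move=> hs i; rewrite -{2}(permKV s i) hs. Qed.

Lemma Sel_sub blk J J' f F : J' `<=` J -> Sel blk J f F -> Sel blk J' f F.
Proof.
move=> sub [h1 h2]; split; first by move=> x /sub; apply: h1.
move=> i x /sub Jx e e0; have [d d0 hd] := h2 i x Jx e e0.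
by exists d => // y /sub; apply: hd.
Qed.

Lemma Sel_perm blk J f F p : bp blk p -> Sel blk J f F ->
  Sel blk J f (fun x i => F x (p i)).
Proof.
move=> hp [h1 h2]; split.
  move=> x Jx; have [s hs e] := h1 x Jx.
  by exists (p * s)%g; [exact: bpM | move=> i; rewrite e permM].
by move=> i x Jx e e0; apply: h2.
Qed.

Lemma Sel_match blk J J' f F G q : Sel blk J f F -> Sel blk J' f G -> J q -> J' q ->
  exists2 p, bp blk p & forall i, G q (p i) = F q i.
Proof.
move=> [h1 _] [h2 _] Jq J'q.
have [s hs es] := h1 q Jq; have [t ht et] := h2 q J'q.
exists (s * t^-1)%g; first by apply: bpM => //; exact: bpV.
by move=> i; rewrite et es permM permKV.
Qed.

Lemma Sel_pt blk f x : Sel blk [set x] f f.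
Proof.
split; first by move=> y _; exists 1%g; [exact: bp1 | move=> i; rewrite perm1].
move=> i y -> e e0; exists 1 => // z -> _; by rewrite subrr normr0.
Qed.

Lemma Sel_glue blk A B f F G q :
  Sel blk A f F -> Sel blk B f G -> (forall x, A x -> x <= q) ->
  (forall x, B x -> q <= x) -> A q -> B q -> F q = G q ->
  Sel blk (A `|` B) f (fun x => if x <= q then F x else G x).
Proof.
move=> [hF1 hF2] [hG1 hG2] Aq Bq Aqq Bqq eq; split.
  move=> x [Ax|Bx].
    by rewrite (Aq x Ax); apply: hF1.
  case: ifP => xq; last by apply: hG1.
  have xeq : x = q by apply/eqP; rewrite eq_le xq Bq.
  by rewrite xeq; apply: hF1.
move=> i x [Ax|Bx] e e0.
- have xq := Aq x Ax.
  have [d d0 hd] := hF2 i x Ax e e0.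
  have [xltq|xeq] := ltP x q.
    exists (Num.min d (q - x)); first by rewrite lt_min d0 subr_gt0.
    move=> y [Ay|By]; rewrite lt_min => /andP[yd yq].
      by rewrite (Aq y Ay) xq; apply: hd.
    have h1 := Bq y By; move: yq; rewrite ltr_norml => /andP[_ h2].
    exfalso; clear -h1 h2 xltq; lra.
  have xqe : x = q by apply/eqP; rewrite eq_le xq xeq.
  subst x.
  have [d' d'0 hd'] := hG2 i q Bqq e e0.
  exists (Num.min d d'); first by rewrite lt_min d0 d'0.
  move=> y [Ay|By]; rewrite lt_min => /andP[yd yd']; rewrite lexx.
    by rewrite (Aq y Ay); apply: hd.
  case: ifP => yq.
    have -> : y = q by apply/eqP; rewrite eq_le yq Bq.
    by rewrite subrr normr0.
  by rewrite eq; apply: hd'.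
- have xq := Bq x Bx.
  have [d d0 hd] := hG2 i x Bx e e0.
  have [xgtq|xeq] := ltP q x.
    have xq' : (x <= q) = false by rewrite leNgt xgtq.
    exists (Num.min d (x - q)); first by rewrite lt_min d0 subr_gt0.
    move=> y [Ay|By]; rewrite lt_min => /andP[yd yq].
      have h1 := Aq y Ay; move: yq; rewrite ltr_norml => /andP[h2 _].
      exfalso; clear -h1 h2 xgtq; lra.
    have -> : (y <= q) = false by apply/negbTE; rewrite -ltNge; move: yq; rewrite ltr_norml => /andP[h2 _]; clear -h2; lra.
    by apply: hd.
  have xqe : x = q by apply/eqP; rewrite eq_le xq xeq.
  subst x.
  have [d' d'0 hd'] := hF2 i q Aqq e e0.
  exists (Num.min d d'); first by rewrite lt_min d0 d'0.
  move=> y [Ay|By]; rewrite lt_min => /andP[yd yd'] /=.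
    by rewrite (Aq y Ay); apply: hd'.
  case: ifP => yq.
    have -> : y = q by apply/eqP; rewrite eq_le yq Bq.
    by rewrite subrr normr0.
  by rewrite eq; apply: hd.
Qed.

End SelDefs.

Section CL.
Variables (R : realType) (I : finType) (n : nat).
Local Notation V := 'rV[R]_n.

Definition seg (a b : R) := [set x : R | a <= x <= b].
Definition convex (J : set R) := forall x y z, J x -> J z -> x <= y <= z -> J y.
Definition LS blk (J : set R) (f : R -> I -> V) := forall y, J y ->
  exists2 d, 0 < d & exists F, Sel blk (J `&` [set x | `|x - y| <= d]) f F.

Lemma CL blk J f : convex J -> LS blk J f -> forall a b, J a -> J b -> a <= b ->
  exists F, Sel blk (seg a b) f F.
Proof.
move=> cJ hLS a b Ja Jb ab.
pose T := [set t | a <= t <= b /\ exists F, Sel blk (seg a t) f F].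
have Ta : T a.
  split; first by rewrite lexx ab.
  exists f; apply: (Sel_sub _ (Sel_pt blk f a)).
  by move=> x /andP[h1 h2]; apply/eqP; rewrite eq_le h1 h2.
have hs : has_sup T.
  split; first by exists a.
  by exists b => t [/andP[_ ->]].
set s := sup T.
have as_ : a <= s := sup_upper_bound hs Ta.
have sb : s <= b by apply: ge_sup; [exists a | move=> t [/andP[_ ->]]].
have Js : J s by apply: (cJ a s b) => //; rewrite as_ sb.
have [d d0 [G hG]] := hLS s Js.
have [t Tt st] := sup_adherent d0 hs.
have ts : t <= s := sup_upper_bound hs Tt.
have [/andP[aat tb] [F hF]] := Tt.
set u := Num.min b (s + d).
have tu : t <= u by rewrite le_min tb /=; clear -ts d0; lra.
have ub : u <= b by rewrite ge_min lexx.
have hG' : Sel blk (seg t u) f G.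
  apply: Sel_sub hG => x /andP[tx xu]; split.
    apply: (cJ a x b) => //; apply/andP; split.
      by apply: le_trans tx.
    by apply: le_trans ub.
  move: xu; rewrite le_min => /andP[_ xu].
  rewrite /= ler_norml; apply/andP; split; rewrite -/s in st; clear -xu st tx; lra.
have s1 : seg a t t by rewrite /seg /= lexx aat.
have s2 : seg t u t by rewrite /seg /= lexx tu.
have [p hp ep] := Sel_match hF hG' s1 s2.
have hG'' := Sel_perm hp hG'.
have hH := Sel_glue hF hG'' (fun x h => proj2 (andP h)) (fun x h => proj1 (andP h))
  s1 s2 (funext (fun i => esym (ep i))).
have Tu : T u.
  split; first by rewrite ub andbT; apply: le_trans tu.
  eexists; apply: (Sel_sub _ hH).
  move=> x /andP[ax xu]; case: (leP x t) => xt.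
    by left; rewrite /seg /= ax.
  by right; rewrite /seg /= xu (ltW xt).
have us : u <= s := sup_upper_bound hs Tu.
have bs : b <= s.
  move: us; rewrite ge_min => /orP[//|h]; exfalso; clear -h d0; lra.
have bu : b <= u by rewrite le_min lexx /=; clear -bs d0; lra.
have [_ [H hH']] := Tu.
exists H; apply: Sel_sub hH' => x /andP[ax xb]; rewrite /seg /= ax /=.
exact: le_trans bu.
Qed.

End CL.

Lemma small_mono (R : realType) (A : R) k k' : 0 <= A -> (k <= k')%N ->
  A / k'.+1%:R <= A / k.+1%:R.
Proof. by move=> A0 kk; rewrite ler_wpM2l // lef_pV2 ?posrE ?ltr0n // ler_nat. Qed.

Lemma small_ex (R : realType) (A e : R) : 0 <= A -> 0 < e -> exists k, A / k.+1%:R < e.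
Proof.
move=> A0 e0; exists (Num.Def.archi_bound (A / e)).
have h := archi_boundP (divr_ge0 A0 (ltW e0)).
rewrite ltr_pdivrMr ?ltr0n // -ltr_pdivrMl //.
rewrite mulrC; apply: (lt_le_trans h); rewrite ler_nat; done.
Qed.

Lemma small_pos (R : realType) (A : R) k : 0 <= A -> 0 <= A / k.+1%:R <= A.
Proof.
move=> A0; rewrite divr_ge0 //= ler_pdivrMr ?ltr0n //.
by rewrite ler_peMr // ler1n.
Qed.

Section Gconv.
Variables (R : realType) (I : finType) (n : nat).
Local Notation V := 'rV[R]_n.

Lemma Sel_ext (blk : I -> seq bool) (J : set R) (f : R -> I -> V) (a b a' b' : R) (g : R -> I -> V) : convex J -> LS blk J f ->
  J a' -> J b' -> a' <= a -> a <= b -> b <= b' ->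
  Sel blk (seg a b) f g -> exists g', Sel blk (seg a' b') f g' /\
    forall x, seg a b x -> g' x = g x.
Proof.
move=> cJ hLS Ja' Jb' a'a ab bb' hg.
have Ja : J a by apply: (cJ a' a b') => //; rewrite a'a /=; apply: le_trans bb'.
have Jb : J b by apply: (cJ a' b b') => //; rewrite bb' andbT; apply: le_trans ab.
have [Fl hFl] := CL cJ hLS Ja' Ja a'a.
have [Fr hFr] := CL cJ hLS Jb Jb' bb'.
have segaa : seg a b a by rewrite /seg /= lexx ab.
have segbb : seg a b b by rewrite /seg /= lexx ab.
have sa'aa : seg a' a a by rewrite /seg /= lexx a'a.
have sbb'b : seg b b' b by rewrite /seg /= lexx bb'.
have [p hp ep] := Sel_match hg hFl segaa sa'aa.
have hFl' := Sel_perm hp hFl.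
have hH1' := Sel_glue hFl' hg (fun x h => proj2 (andP h)) (fun x h => proj1 (andP h))
  sa'aa segaa (funext ep).
set H1 := (fun x => if x <= a then _ else _) in hH1'.
have sH1 : Sel blk (seg a' b) f H1.
  apply: Sel_sub hH1' => x /andP[a'x xb]; case: (leP x a) => xa.
    by left; rewrite /seg /= a'x.
  by right; rewrite /seg /= xb (ltW xa).
have sega'b : seg a' b b by rewrite /seg /= lexx andbT; apply: le_trans ab.
have [q hq eq] := Sel_match sH1 hFr sega'b sbb'b.
have hFr' := Sel_perm hq hFr.
have hH2 := Sel_glue sH1 hFr' (fun x h => proj2 (andP h)) (fun x h => proj1 (andP h))
  sega'b sbb'b (esym (funext eq)).
eexists; split.
  apply: Sel_sub hH2 => x /andP[a'x xb']; case: (leP x b) => xb.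
    by left; rewrite /seg /= a'x.
  by right; rewrite /seg /= xb' (ltW xb).
move=> x /andP[ax xb]; rewrite /= xb /H1.
case: (leP x a) => // xa'.
have -> : x = a by apply/eqP; rewrite eq_le xa' ax.
by apply/funext => i; rewrite ep.
Qed.

Lemma Gconv (blk : I -> seq bool) (J : set R) (f : R -> I -> V) (c d : R) : convex J -> J `<=` seg c d -> LS blk J f ->
  exists F, Sel blk J f F.
Proof.
move=> cJ Jcd hLS.
have [[m Jm]|J0] := pselect (J !=set0); last first.
  exists f; split => [x Jx|i x Jx]; exfalso; apply: J0; by exists x.
have hinf : has_inf J by split; [exists m | exists c => x /Jcd /andP[]].
have hsup : has_sup J by split; [exists m | exists d => x /Jcd /andP[]].
set l := inf J; set v := sup J.
have lm : l <= m by apply: ge_inf => //; case: hinf.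
have mv : m <= v by apply: sup_upper_bound.
pose al k := if `[< J l >] then l else l + (m - l) / k.+1%:R.
pose be k := if `[< J v >] then v else v - (v - m) / k.+1%:R.
have ml0 : 0 <= m - l by rewrite subr_ge0.
have vm0 : 0 <= v - m by rewrite subr_ge0.
have alm : forall k, al k <= m.
  move=> k; rewrite /al; case: ifP => // _.
  have /andP[_ h] := small_pos k ml0; move: h; generalize ((m - l) / k.+1%:R) => X h.
  clear -h; lra.
have mbe : forall k, m <= be k.
  move=> k; rewrite /be; case: ifP => // _.
  have /andP[_ h] := small_pos k vm0; move: h; generalize ((v - m) / k.+1%:R) => X h.
  clear -h; lra.
have Jal : forall k, J (al k).
  move=> k; rewrite /al; case: ifPn => [/asboolP //|/asboolP nJl].
  have lm' : l < m by rewrite lt_neqAle lm andbT; apply/eqP => e; apply: nJl; rewrite e.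
  have pos : 0 < (m - l) / k.+1%:R by rewrite divr_gt0 ?ltr0n // subr_gt0.
  have [z Jz zl] := inf_adherent pos hinf.
  apply: (cJ z _ m) => //; apply/andP; split; first by apply: ltW.
  by have := alm k; rewrite /al; case: ifPn => // /asboolP.
have Jbe : forall k, J (be k).
  move=> k; rewrite /be; case: ifPn => [/asboolP //|/asboolP nJv].
  have mv' : m < v by rewrite lt_neqAle mv andbT; apply/eqP => e; apply: nJv; rewrite -e.
  have pos : 0 < (v - m) / k.+1%:R by rewrite divr_gt0 ?ltr0n // subr_gt0.
  have [z Jz zl] := sup_adherent pos hsup.
  apply: (cJ m _ z) => //; apply/andP; split; last by apply: ltW.
  by have := mbe k; rewrite /be; case: ifPn => // /asboolP.
have almono : forall k k', (k <= k')%N -> al k' <= al k.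
  move=> k k' kk; rewrite /al; case: ifP => // _.
  by rewrite lerD2l small_mono.
have bemono : forall k k', (k <= k')%N -> be k <= be k'.
  move=> k k' kk; rewrite /be; case: ifP => // _.
  by rewrite lerD2l lerN2 small_mono.
have cover : forall x, J x -> exists k, exists2 e, 0 < e &
    forall y, J y -> `|y - x| < e -> seg (al k) (be k) y.
  move=> x Jx.
  have [k1 [e1 e10 h1]] : exists k, exists2 e, 0 < e & forall y, J y -> `|y - x| < e -> al k <= y.
    case: (pselect (J l)) => Jl.
      exists 0%N, 1 => // y Jy _; rewrite /al; case: ifPn => [_|/asboolP//].
      by apply: ge_inf => //; case: hinf.
    have lx : l < x.
      rewrite lt_neqAle ge_inf //; last by case: hinf.
      by rewrite andbT; apply/eqP => e; apply: Jl; rewrite e.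
    have hxl : 0 < x - l by rewrite subr_gt0.
    have [k hk] := small_ex ml0 hxl.
    exists k, (x - al k).
      rewrite /al; case: ifPn => [/asboolP//|_]; move: hk.
      by generalize ((m - l) / k.+1%:R) => X hk; clear -hk; lra.
    move=> y Jy; rewrite ltr_norml => /andP[h _]; clear -h; lra.
  have [k2 [e2 e20 h2]] : exists k, exists2 e, 0 < e & forall y, J y -> `|y - x| < e -> y <= be k.
    case: (pselect (J v)) => Jv.
      exists 0%N, 1 => // y Jy _; rewrite /be; case: ifPn => [_|/asboolP//].
      by apply: sup_upper_bound.
    have xv : x < v.
      rewrite lt_neqAle sup_upper_bound //.
      by rewrite andbT; apply/eqP => e; apply: Jv; rewrite -e.
    have hxv : 0 < v - x by rewrite subr_gt0.
    have [k hk] := small_ex vm0 hxv.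
    exists k, (be k - x).
      rewrite /be; case: ifPn => [/asboolP//|_]; move: hk.
      by generalize ((v - m) / k.+1%:R) => X hk; clear -hk; lra.
    move=> y Jy; rewrite ltr_norml => /andP[_ h]; clear -h; lra.
  exists (maxn k1 k2), (Num.min e1 e2); first by rewrite lt_min e10 e20.
  move=> y Jy; rewrite lt_min => /andP[y1 y2]; apply/andP; split.
    by apply: le_trans (h1 y Jy y1); apply: almono; rewrite leq_maxl.
  by apply: le_trans (h2 y Jy y2) _; apply: bemono; rewrite leq_maxr.
have ext : forall p : nat * (R -> I -> V), exists g',
    Sel blk (seg (al p.1) (be p.1)) f p.2 ->
    Sel blk (seg (al p.1.+1) (be p.1.+1)) f g' /\
    forall x, seg (al p.1) (be p.1) x -> g' x = p.2 x.
  move=> [k g] /=; case: (pselect (Sel blk (seg (al k) (be k)) f g)) => hg.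
    have [g' hg'] := Sel_ext cJ hLS (Jal k.+1) (Jbe k.+1) (almono _ _ (leqnSn k))
      (le_trans (alm k) (mbe k)) (bemono _ _ (leqnSn k)) hg.
    by exists g'.
  by exists f.
have [E hE] := choice ext.
have [g0 hg0] := CL cJ hLS (Jal 0%N) (Jbe 0%N) (le_trans (alm 0%N) (mbe 0%N)).
pose gs := fix gs k := match k with 0%N => g0 | k'.+1 => E (k', gs k') end.
have selk : forall k, Sel blk (seg (al k) (be k)) f (gs k).
  elim=> [//|k ih]; exact: (proj1 (hE (k, gs k) ih)).
have coh : forall k j x, seg (al k) (be k) x -> gs (j + k)%N x = gs k x.
  move=> k; elim=> [//|j ih] x hx; rewrite addSn /=.
  rewrite (proj2 (hE (j + k, gs (j + k))%N (selk _))) /= ?ih //.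
  move: hx; rewrite /seg /= => /andP[h1 h2]; apply/andP; split.
    by apply: le_trans h1; apply: almono; rewrite leq_addl.
  by apply: le_trans h2 _; apply: bemono; rewrite leq_addl.
have idx : forall x, exists k, J x -> seg (al k) (be k) x.
  move=> x; case: (pselect (J x)) => Jx; last by exists 0%N.
  have [k [e e0 he]] := cover x Jx; exists k => _; apply: he => //.
  by rewrite subrr normr0.
have [N hN] := choice idx.
have Fk : forall x k, J x -> seg (al k) (be k) x -> gs (N x) x = gs k x.
  move=> x k Jx hx; have hNx := hN x Jx.
  case: (leqP k (N x)) => kN.
    by rewrite -(subnK kN) coh.
  by rewrite -(subnK (ltnW kN)) coh.
exists (fun x => gs (N x) x); split.
  move=> x Jx; have [s hs es] := proj1 (selk (N x)) x (hN x Jx).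
  by exists s.
move=> i x Jx e e0.
have [k [e1 e10 he1]] := cover x Jx.
have segx : seg (al k) (be k) x by apply: he1 => //; rewrite subrr normr0.
have [e2 e20 he2] := proj2 (selk k) i x segx e e0.
exists (Num.min e1 e2); first by rewrite lt_min e10 e20.
move=> y Jy; rewrite lt_min => /andP[y1 y2].
have segy := he1 y Jy y1.
by rewrite (Fk y k Jy segy) (Fk x k Jx segx); apply: he2.
Qed.

End Gconv.

Definition btw (R : realType) (a b z : R) := (a <= z <= b) || (b <= z <= a).

Lemma btw_split (R : realType) (a b c z : R) : btw a b z -> btw a c z \/ btw c b z.
Proof.
rewrite /btw => /orP[]/andP[h1 h2]; have [cz|cz] := boolP (c <= z).
- by right; rewrite h2.
- by left; rewrite -ltNge in cz; rewrite h1 (ltW cz).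
- by left; rewrite h2 orbT.
- by right; rewrite -ltNge in cz; rewrite h1 (ltW cz) orbT.
Qed.

Lemma btw_sym (R : realType) (a b z : R) : btw a b z = btw b a z.
Proof. by rewrite /btw orbC. Qed.

Lemma btw_dist (R : realType) (a b z : R) : btw a b z -> `|z - a| <= `|b - a|.
Proof.
rewrite /btw => /orP[]/andP[h1 h2].
  have ba := le_trans h1 h2.
  by rewrite !ger0_norm ?subr_ge0 // lerD2r.
have ba := le_trans h1 h2.
by rewrite !ler0_norm ?subr_le0 // lerN2 lerD2r.
Qed.

Section Glob.
Variables (R : realType) (I : finType) (n : nat).
Local Notation V := 'rV[R]_n.

Definition Cpt (blk : I -> seq bool) (f : R -> I -> V) y :=
  forall i j, blk i = blk j -> f y i = f y j.

Lemma Glob (blk : I -> seq bool) (c d : R) (f : R -> I -> V) :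
  MCb blk (seg c d) f ->
  (forall y, seg c d y -> ~ Cpt blk f y -> exists2 de, 0 < de &
     exists F, Sel blk (seg c d `&` [set x | `|x - y| <= de]) f F) ->
  exists F, Sel blk (seg c d) f F.
Proof.
move=> hMC hloc.
set J := seg c d.
have cJ : convex J.
  move=> x y z /andP[cx xd] /andP[cz zd] /andP[xy yz]; apply/andP; split.
    exact: le_trans xy.
  exact: le_trans zd.
pose U x := J x /\ ~ Cpt blk f x.
have opn : forall y, U y -> exists2 de, 0 < de & forall z, J z -> `|z - y| < de -> U z.
  move=> y [Jy nC].
  have [i /existsNP[j /not_implyP[bij nij]]] : exists i, ~ forall j, blk i = blk j -> f y i = f y j.
    by apply/existsNP.
  pose e := `|f y i - f y j| / 2.
  have e0 : 0 < e by rewrite divr_gt0 // normr_gt0 subr_eq0; apply/eqP.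
  have [de de0 hde] := hMC y Jy e e0.
  exists de => // z Jz zy; split => // Cz.
  have [s hs es] := hde z Jz zy.
  have hs' := bpV hs.
  have e1 := es (s^-1 i)%g; have e2 := es (s^-1 j)%g.
  rewrite !permKV in e1 e2.
  have := Cz (s^-1 i)%g (s^-1 j)%g; rewrite !hs' bij => /(_ erefl) Ceq.
  rewrite Ceq in e1.
  have : `|f y i - f y j| < 2 * e.
    apply: le_lt_trans (ler_distD (f z (s^-1 j)%g) _ _) _.
    rewrite distrC mulr2n mulrDl mul1r; exact: ltrD.
  rewrite /e mulrC -mulrA mulVf ?mulr1 ?ltxx //.
pose comp x := [set y | J y /\ forall z, btw x y z -> U z].
have compU : forall x y, comp x y -> U y.
  by move=> x y [_ h]; apply: h; rewrite /btw !lexx andbT /=; exact: le_total.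
have compxx : forall x, U x -> comp x x.
  move=> x Ux; split; first by case: Ux.
  move=> z; rewrite /btw orbb => /andP[h1 h2].
  by have -> : z = x by apply/eqP; rewrite eq_le h1 h2.
have compcvx : forall x, convex (comp x).
  move=> x y1 y2 y3 [J1 h1] [J3 h3] /andP[h12 h23]; split.
    by apply: (cJ y1 y2 y3) => //; rewrite h12 h23.
  move=> z hz; case: (btw_split y3 hz) => h; first by apply: h3.
  have h' : btw y1 y3 z.
    move: h; rewrite /btw => /orP[]/andP[a1 a2]; apply/orP; left; apply/andP;
      split; clear -a1 a2 h12 h23; lra.
  case: (btw_split x h') => h''; last by apply: h3.
  by apply: h1; rewrite btw_sym.
have compJ : forall x, comp x `<=` J by move=> x y [].
have compLS : forall x, LS blk (comp x) f.
  move=> x y cy; have [Jy nCy] := compU x y cy.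
  have [de de0 [F hF]] := hloc y Jy nCy.
  exists de => //; exists F; apply: Sel_sub hF => z [cz hz]; split => //.
  exact: compJ cz.
have compeq : forall x, U x -> exists2 de, 0 < de & forall y, J y -> `|y - x| < de ->
    U y /\ comp y = comp x.
  move=> x Ux; have [de de0 hde] := opn x Ux.
  exists de => // y Jy yx.
  have segU : forall z, btw x y z -> U z.
    move=> z hz; apply: hde.
      move: hz; rewrite /btw => /orP[]/andP[a1 a2];
        [apply: (cJ x z y) | apply: (cJ y z x)] => //; try (by case: Ux);
        by rewrite a1 a2.
    by apply: le_lt_trans yx; apply: btw_dist.
  split; first by apply: segU; rewrite /btw !lexx andbT /=; exact: le_total.
  apply/seteqP; split => w [Jw hw]; split => // z hz.
    case: (btw_split y hz) => h; first by apply: segU.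
    by apply: hw.
  case: (btw_split x hz) => h; last by apply: hw.
  by apply: segU; rewrite btw_sym.
have SKex : forall K : set R, exists g, (exists x, U x /\ K = comp x) -> Sel blk K f g.
  move=> K; case: (pselect (exists x, U x /\ K = comp x)) => [[x [Ux ->]]|nK].
    have [F hF] := @Gconv R I n blk (comp x) f c d (compcvx x) (compJ x) (compLS x).
    by exists F.
  by exists f.
have [SK hSK] := choice SKex.
have selc : forall x, U x -> Sel blk (comp x) f (SK (comp x)).
  by move=> x Ux; apply: hSK; exists x.
pose F x := if `[< U x >] then SK (comp x) x else f x.
have pw : forall x, J x -> exists2 s, bp blk s & forall i, F x i = f x (s i).
  move=> x Jx; rewrite /F; case: ifPn => [/asboolP Ux|_].
    exact: (proj1 (selc x Ux) x (compxx x Ux)).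
  by exists 1%g; [exact: bp1 | move=> i; rewrite perm1].
exists F; split => //.
move=> i x Jx e e0.
case: (pselect (U x)) => Ux.
  have [de1 de10 h1] := compeq x Ux.
  have [de2 de20 h2] := proj2 (selc x Ux) i x (compxx x Ux) e e0.
  exists (Num.min de1 de2); first by rewrite lt_min de10 de20.
  move=> y Jy; rewrite lt_min => /andP[y1 y2].
  have [Uy ceq] := h1 y Jy y1.
  rewrite /F; case: ifPn => [_|/asboolP //]; case: ifPn => [_|/asboolP //].
  rewrite ceq; apply: h2 => //; rewrite -ceq; exact: compxx.
have Cx : Cpt blk f x by apply: contrapT => nC; apply: Ux.
have [de de0 hde] := hMC x Jx e e0.
exists de => // y Jy yx.
have [s hs es] := hde y Jy yx.
have [t ht et] := pw y Jy.
have -> : F x i = f x i by rewrite /F; case: ifPn => [/asboolP //|//].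
rewrite et; have := es (t i); rewrite (Cx (s (t i)) i) //.
by rewrite hs ht.
Qed.

End Glob.

Lemma minpos (R : realType) (T : finType) (g : T -> R) : (forall i, 0 < g i) ->
  0 < \big[Num.min/1]_i g i /\ forall i, \big[Num.min/1]_j g j <= g i.
Proof.
move=> gp; split.
  apply: (big_ind (fun x => 0 < x)); [exact: ltr01 | move=> x y hx hy; by rewrite lt_min hx hy | by move=> i _].
by move=> i; rewrite (bigD1 i) //= ge_min lexx.
Qed.

Section Main.
Variables (R : realType) (I : finType) (n : nat).
Local Notation V := 'rV[R]_n.

Definition msr (blk : I -> seq bool) := #|[pred p : I * I | blk p.1 == blk p.2]|.

Lemma selmain N (blk : I -> seq bool) : (msr blk <= N)%N ->
  forall (c d : R) (f : R -> I -> V), MCb blk (seg c d) f ->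
  exists F, Sel blk (seg c d) f F.
Proof.
elim: N blk => [|N IH] blk hN c d f hMC; apply: Glob => // y Jy nC;
  have [i0 /existsNP[j0 /not_implyP[bij nij]]] :
    exists i, ~ forall j, blk i = blk j -> f y i = f y j by apply/existsNP.
  have mpos : (0 < msr blk)%N.
    rewrite /msr (cardD1 (i0, j0)).
    have -> : (i0, j0) \in [pred p : I * I | blk p.1 == blk p.2] by rewrite inE /= bij.
    by [].
  by move: hN; rewrite leqn0 => /eqP h; rewrite h in mpos.
set p := f y i0.
set J := seg c d.
pose g i := if f y i == p then 1 else `|f y i - p|.
have gp : forall i, 0 < g i.
  move=> i; rewrite /g; case: ifPn => // /eqP h.
  by rewrite normr_gt0 subr_eq0; apply/eqP.
have [r0 rle] := minpos gp.
set r := \big[Num.min/1]_j g j in r0 rle.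
have rle' : forall i, f y i != p -> r <= `|f y i - p|.
  by move=> i hi; have := rle i; rewrite /g (negbTE hi).
set e := r / 4.
have e0 : 0 < e by rewrite divr_gt0.
have [de0 de00 hde0] := hMC y Jy e e0.
have tex : forall z, exists t : {perm I}, J z /\ `|z - y| < de0 ->
    bp blk t /\ forall i, `|f z (t i) - f y i| < e.
  move=> z; case: (pselect (J z /\ `|z - y| < de0)) => [[Jz zy]|]; last by exists 1%g.
  have [s hs es] := hde0 z Jz zy.
  exists (s^-1)%g => _; split; first exact: bpV.
  by move=> i; have := es (s^-1 i)%g; rewrite permKV.
have [t ht] := choice tex.
set de := de0 / 2.
have de0' : 0 < de by rewrite divr_gt0.
set c' := Num.max c (y - de); set d' := Num.min d (y + de).
have J'J : forall z, seg c' d' z -> J z /\ `|z - y| < de0.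
  move=> z; rewrite /seg /= ge_max le_min => /andP[/andP[cz yz] /andP[zd zy]]; split.
    by apply/andP.
  rewrite ltr_norml; apply/andP; split; rewrite /de in yz zy; clear -yz zy de00; lra.
pose f' z i := f z (t z i).
pose blk' i := (f y i == p) :: blk i.
have cd' : c' <= d'.
  move: (Jy); rewrite /J /seg /= => /andP[cy yd].
  rewrite /c' /d' ge_max !le_min; apply/andP; split; apply/andP; split;
    clear -de0' cy yd; lra.
have MC' : MCb blk' (seg c' d') f'.
  move=> x Jx' eps eps0.
  have [Jx xy] := J'J x Jx'.
  have [txb txe] := ht x (J'J x Jx').
  have eps'0 : 0 < Num.min eps e by rewrite lt_min eps0 e0.
  have [de1 de10 hde1] := hMC x Jx _ eps'0.
  exists de1 => // z Jz' zx.
  have [Jz zy] := J'J z Jz'.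
  have [tzb tze] := ht z (J'J z Jz').
  have [u hu eu] := hde1 z Jz zx.
  exists (t z * u * (t x)^-1)%g.
    move=> i; rewrite /blk' !permM.
    have hb : blk ((t x)^-1 (u (t z i)))%g = blk i.
      by rewrite (bpV txb) hu tzb.
    rewrite hb; congr (_ :: _).
    set j := ((t x)^-1 (u (t z i)))%g.
    have dj : `|f y j - f y i| < r.
      have h1 := txe j; rewrite /j permKV in h1.
      have h2 := eu (t z i).
      have h3 := tze i.
      have : `|f y j - f y i| < e + Num.min eps e + e.
        apply: le_lt_trans (ler_distD (f x (u (t z i))) _ _) _.
        rewrite -addrA; apply: ltrD; first by rewrite distrC.
        apply: le_lt_trans (ler_distD (f z (t z i)) _ _) _.
        by apply: ltrD; first by rewrite distrC.
      move=> h; apply: lt_le_trans h _.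
      have : Num.min eps e <= e by rewrite ge_min lexx orbT.
      rewrite /e; move=> hm; clear -hm r0; lra.
    have [ei|ei] := eqVneq (f y i) p; have [ej|ej] := eqVneq (f y j) p => //.
      by have := rle' j ej; rewrite -ei => h; move: (lt_le_trans dj h); rewrite ltxx.
    by have := rle' i ei; rewrite -ej distrC => h; move: (lt_le_trans dj h); rewrite ltxx.
  move=> i; rewrite /f' !permM permKV.
  by apply: lt_le_trans (eu (t z i)) _; rewrite ge_min lexx.
have msr' : (msr blk' < msr blk)%N.
  apply: proper_card; apply/properP; split.
    apply/fintype.subsetP => -[i j]; rewrite !inE /blk' /= => /eqP h.
    by case: h => _ ->.
  exists (i0, j0); first by rewrite inE /= bij.
  rewrite inE /blk' /= eqxx; apply/negP => /eqP [] /esym/eqP.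
  by move=> h _; apply: nij; rewrite h.
have hm : (msr blk' <= N)%N by rewrite -ltnS; apply: leq_trans msr' hN.
have [F' hF'] := IH blk' hm c' d' f' MC'.
exists de => //; exists F'.
apply: (@Sel_sub R I n blk (seg c' d')).
  move=> z [Jz hz]; move: Jz; rewrite /J /seg /= => /andP[cz zd].
  move: hz; rewrite /= ler_norml => /andP[h1 h2].
  rewrite ge_max le_min; apply/andP; split; apply/andP; split => //; clear -h1 h2; lra.
case: hF' => h1 h2; split => // x Jx'.
have [s hs es] := h1 x Jx'.
have [txb _] := ht x (J'J x Jx').
exists (s * t x)%g.
  apply: bpM => // i; have := hs i; rewrite /blk' => -[].
  by [].
by move=> i; rewrite es /f' permM.
Qed.

End Main.

Lemma eps_within (R : realType) (W : normedModType R) (A : set R) (h : R -> W) :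
  (forall x, A x -> forall e, 0 < e -> exists2 d, 0 < d &
     forall y, A y -> `|y - x| < d -> `|h y - h x| < e) -> {within A, continuous h}.
Proof.
move=> hc; apply/subspace_continuousP => x Ax.
apply/cvgrPdist_lt => e e0; have [d d0 hd] := hc x Ax e e0.
rewrite near_withinE; apply/nbhs_ballP; exists d => //= y; rewrite /ball /= => xy Ay.
by rewrite distrC; apply: hd => //; rewrite distrC.
Qed.

Lemma norm_le_sqdist (R : realType) (n : nat) (u v : 'rV[R]_n) :
  `|u - v| <= Num.sqrt (sqdist u v).
Proof.
rewrite [leLHS]/Num.Def.normr /= mx_normrE; apply: bigmax_le => // -[i j] _ /=.
rewrite (ord1 i) !mxE -sqrtr_sqr ler_sqrt ?sumr_ge0 // => [|k _]; last exact: sqr_ge0.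
rewrite /sqdist (bigD1 j) //= lerDl sumr_ge0 // => k _; exact: sqr_ge0.
Qed.

Lemma Gdist_near (R : realType) (Q n : nat) (p q : Qtuple R Q n) (e : R) :
  Gdist p q < e -> exists s : 'S_Q, forall i, `|p i - q (s i)| < e.
Proof.
have [s hs] : exists s, \big[Num.min/Gsq p q 1%g]_(s : 'S_Q) Gsq p q s = Gsq p q s.
  apply: (big_ind (fun v => exists s, v = Gsq p q s)).
  - by exists 1%g.
  - move=> x y [s1 ->] [s2 ->]; rewrite /Num.min; case: ifP => _; by eexists.
  - by move=> s _; exists s.
rewrite /Gdist hs => h; exists s => i; apply: le_lt_trans h.
apply: (le_trans (norm_le_sqdist _ _)); rewrite ler_sqrt; last first.
  by rewrite /Gsq sumr_ge0 // => k _; rewrite /sqdist sumr_ge0 // => l _; exact: sqr_ge0.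
rewrite /Gsq (bigD1 i) //= lerDl sumr_ge0 // => k _; rewrite /sqdist sumr_ge0 // => l _; exact: sqr_ge0.
Qed.

Lemma deriv_from (R : realType) (n : nat) (G : R -> 'rV[R]_n) (x0 : R) (c v : 'rV[R]_n) :
  (forall e, 0 < e -> exists2 d, 0 < d & forall x, 0 < `|x - x0| < d ->
     `|G x - (c + x *: v)| < e * `|x - x0|) ->
  G x0 = c + x0 *: v -> derivable G x0 1.
Proof.
move=> hG hG0; apply/cvg_ex; exists v; apply/cvgrPdist_lt => e e0.
have [d d0 hd] := hG e e0.
rewrite near_withinE; apply/nbhs_ballP; exists d => //= h; rewrite /ball /= sub0r normrN => hdh hne.
have -> : h%:A = h by rewrite /GRing.scale /= mulr1.
set w := G (h + x0) - (c + (h + x0) *: v).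
have e1 : G (h + x0) - G x0 = w + h *: v.
  by rewrite hG0 /w scalerDl (addrC (h *: v)) addrA [in RHS]opprD [in RHS]addrA subrK.
have h0 : h != 0 := hne.
rewrite e1 scalerDr scalerA mulVf // scale1r opprD addrA addrAC subrr add0r normrN.
rewrite normrZ normrV ?unitfE // mulrC ltr_pdivrMr ?normr_gt0 //.
by have := hd (h + x0); rewrite addrK normr_gt0 h0 hdh /=; apply.
Qed.

Lemma zero_of_small (R : realType) (n : nat) (z : 'rV[R]_n) :
  (forall e, 0 < e -> `|z| < e) -> z = 0.
Proof.
move=> h; apply/eqP; rewrite -normr_eq0; apply/negPn/negP => hz.
have hz' : 0 < `|z| by rewrite lt_neqAle eq_sym hz normr_ge0.
by have := h _ hz'; rewrite ltxx.
Qed.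

Unset Implicit Arguments.

Theorem theorem5p2 (R : realType) (Q n : nat) (a b x0 : R)
    (f : R -> Qtuple R Q n) :
  Qcontinuous_on a b f ->
  a < x0 < b ->
  strongly_affinely_approximatable a b f x0 ->
  exists F : 'I_Q -> R -> 'rV[R]_n,
    [/\ forall i, {within `[a, b], continuous (F i)},
        forall x, a <= x <= b -> exists s : 'S_Q, forall i, F i x = f x (s i) &
        forall i, derivable (F i) x0 1].
Proof.
move=> hcont /andP[ax0 x0b] [A [hA happ hstr]].
pose blk := fun _ : 'I_Q => [::] : seq bool.
have MC : MCb blk (seg a b) f.
  move=> x Jx e e0; have [d d0 hd] := hcont x Jx e e0.
  exists d => // y Jy yx; have [s hs] := Gdist_near (hd y Jy yx).
  by exists s.
have [g [gpw gcont]] := selmain (leqnn (msr blk)) MC.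
have approx : forall e, 0 < e -> exists2 d, 0 < d & forall x, a <= x <= b ->
    0 < `|x - x0| < d -> exists s : 'S_Q, forall k, `|g x k - A (s k) x| < e * `|x - x0|.
  move=> e e0; have [d d0 hd] := happ e e0.
  exists d => // x Jx hx; have := hd x Jx hx.
  have hx0 : 0 < `|x - x0| by case/andP: hx.
  rewrite ltr_pdivrMr // => /Gdist_near [s0 hs0].
  have [p _ hp] := gpw x Jx.
  exists (p * s0)%g => k; rewrite hp permM; exact: hs0.
have hA' : forall i, exists cv : 'rV[R]_n * 'rV[R]_n, forall x, A i x = cv.1 + x *: cv.2.
  by move=> i; have [c [v h]] := hA i; exists (c, v).
have [cv hcv] := choice hA'.
set K := \sum_i `|(cv i).2|.
have K0 : 0 <= K by rewrite sumr_ge0.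
have Alip : forall j x, `|A j x - A j x0| <= K * `|x - x0|.
  move=> j x.
  have -> : A j x - A j x0 = (x - x0) *: (cv j).2 by rewrite !hcv scalerBl opprD addrACA subrr add0r.
  rewrite normrZ.
  rewrite mulrC ler_wpM2r // /K (bigD1 j) //= lerDl sumr_ge0.
  by [].
  by move=> *; exact: normr_ge0.
pose gr (ij : 'I_Q * 'I_Q) := if A ij.1 x0 == A ij.2 x0 then 1 else `|A ij.1 x0 - A ij.2 x0|.
have grp : forall ij, 0 < gr ij.
  move=> ij; rewrite /gr; case: ifPn => // h.
  by rewrite normr_gt0 subr_eq0.
have [r0 rle] := minpos grp.
set r := \big[Num.min/1]_ij gr ij in r0 rle.
have rgap : forall i j, A i x0 != A j x0 -> r <= `|A i x0 - A j x0|.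
  by move=> i1 j1 hij; have := rle (i1, j1); rewrite /gr /= (negbTE hij).
have [d1 d10 hd1] := approx 1 ltr01.
set de := Num.min (Num.min (x0 - a) (b - x0)) (Num.min d1 (Num.min (r / 8) (r / (8 * (K + 1))))).
have de0 : 0 < de.
  rewrite /de !lt_min !subr_gt0 ax0 x0b d10 !divr_gt0 //; last by rewrite mulr_gt0 // ltr_pwDr.
have K10 : 0 < K + 1 by rewrite ltr_pwDr.
have deJ : forall x, `|x - x0| < de -> a <= x <= b.
  have dea : de <= x0 - a by rewrite /de !ge_min lexx.
  have deb : de <= b - x0 by rewrite /de !ge_min lexx !orbT.
  move=> x hx; move: (lt_le_trans hx dea) (lt_le_trans hx deb).
  rewrite !ltr_norml => /andP[h1 h2] /andP[h3 h4].
  apply/andP; split; clear -h1 h2 h3 h4; lra.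
have ded1 : de <= d1 by rewrite /de !ge_min lexx !orbT.
have der8 : de <= r / 8 by rewrite /de !ge_min lexx !orbT.
have deK : K * de <= r / 8.
  have h : de <= r / (8 * (K + 1)) by rewrite /de !ge_min lexx !orbT.
  have : (K + 1) * de <= r / 8.
    rewrite -ler_pdivlMl // (le_trans h) //.
    by rewrite [leRHS]mulrC -mulrA -invfM lexx.
  move=> hh; apply: le_trans hh; rewrite ler_wpM2r ?ltW //. by rewrite ltrDl.
clearbody de.
have near_cl : forall x, 0 < `|x - x0| < de -> forall (s : 'S_Q) k,
    `|g x k - A (s k) x| < `|x - x0| -> `|g x k - A (s k) x0| < r / 4.
  move=> x /andP[hx1 hx2] s k h.
  apply: le_lt_trans (ler_distD (A (s k) x) _ _) _.
  have h2 : `|A (s k) x - A (s k) x0| <= r / 8.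
    apply: le_trans (Alip _ _) _; apply: le_trans deK.
    by rewrite ler_wpM2l // ltW.
  have h3 : `|x - x0| < r / 8 by apply: lt_le_trans der8.
  apply: (lt_le_trans (ltr_leD (lt_trans h h3) h2)).
  clear; lra.
have Jx0 : seg a b x0 by rewrite /seg /= (ltW ax0) (ltW x0b).
pose x1 := x0 + de / 2.
have x1d : 0 < `|x1 - x0| < de.
  have -> : x1 - x0 = de / 2 by rewrite /x1 addrAC subrr add0r.
  have h : 0 < de / 2 by rewrite divr_gt0.
  rewrite gtr0_norm // h /=; clear -de0; lra.
have Jx1 : a <= x1 <= b by apply: deJ; case/andP: x1d.
have x1d1 : 0 < `|x1 - x0| < d1.
  by case/andP: x1d => h1 h2; rewrite h1 (lt_le_trans h2 ded1).
have [s1 hs1] := hd1 x1 Jx1 x1d1.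
have hd1' : forall z, 0 < `|z - x0| < de -> exists s : 'S_Q, forall k,
    `|g z k - A (s k) z| < `|z - x0|.
  move=> z /andP[z1 z2].
  have Jz : a <= z <= b by apply: deJ.
  have zd1 : 0 < `|z - x0| < d1 by rewrite z1 (lt_le_trans z2 ded1).
  have [sz hsz] := hd1 z Jz zd1.
  by exists sz => k; rewrite -[X in _ < X]mul1r.
have claim : forall k x, `|x - x0| < de -> `|g x k - A (s1 k) x0| < r / 2.
  move=> k.
  pose ph z := `|g z k - A (s1 k) x0|.
  have dich0 : forall z, 0 < `|z - x0| < de -> ph z < r / 4 \/ 3 * r / 4 < ph z.
    move=> z hz; have [sz hsz] := hd1' z hz.
    have h := near_cl z hz sz k (hsz k).
    have [e|ne] := eqVneq (A (sz k) x0) (A (s1 k) x0).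
      by left; rewrite /ph -e.
    right; have := rgap _ _ ne.
    have := ler_distD (g z k) (A (sz k) x0) (A (s1 k) x0).
    rewrite (distrC (A (sz k) x0) (g z k)) => t1 t2.
    have h2 := le_trans t2 t1.
    have h3 : r < r / 4 + ph z by apply: le_lt_trans h2 _; rewrite ltrD2r.
    move: h3; clear; lra.
  have dich : forall z, `|z - x0| < de -> ph z < 3 * r / 8 \/ 5 * r / 8 < ph z.
    move=> z hz; have [zx|zx] := eqVneq z x0; last first.
      have hz' : 0 < `|z - x0| < de by rewrite hz normr_gt0 subr_eq0 zx.
      case: (dich0 z hz') => h; [left|right]; move: h; clear -r0; lra.
    subst z.
    have r8 : 0 < r / 8 by rewrite divr_gt0.
    have [dc dc0 hdc] := gcont k x0 Jx0 _ r8.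
    pose z' := x0 + Num.min de dc / 2.
    have mpos : 0 < Num.min de dc by rewrite lt_min de0 dc0.
    have hz'1 : `|z' - x0| = Num.min de dc / 2.
      by rewrite /z' addrAC subrr add0r gtr0_norm // divr_gt0.
    have hz' : 0 < `|z' - x0| < de.
      rewrite hz'1 divr_gt0 //=; apply: (@lt_le_trans _ _ (Num.min de dc)).
        by clear -mpos; lra.
      by rewrite ge_min lexx.
    have Jz' : seg a b z' by apply: deJ; case/andP: hz'.
    have hgz : `|g z' k - g x0 k| < r / 8.
      apply: hdc => //; rewrite hz'1; apply: (@lt_le_trans _ _ (Num.min de dc)).
        by clear -mpos; lra.
      by rewrite ge_min lexx orbT.
    set D := `|g z' k - g x0 k| in hgz.
    have t1 : ph x0 <= D + ph z'.
      by rewrite /D distrC; apply: ler_distD.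
    have t2 : ph z' <= D + ph x0.
      by rewrite /D; apply: ler_distD.
    case: (dich0 z' hz') => h; [left|right]; move: h t1 t2 hgz; clear -r0; lra.
  have ph1 : ph x1 < r / 4 by apply: near_cl => //; have := hs1 k; rewrite mul1r.
  move=> x hx; case: (ltP (ph x) (r / 2)) => // hge; exfalso.
  have key : forall l u, l <= u -> `|l - x0| < de -> `|u - x0| < de ->
      Num.min (ph l) (ph u) <= r / 2 <= Num.max (ph l) (ph u) -> False.
    move=> l u lu hl hu hv.
    have cont : {within `[l, u], continuous ph}.
      apply: eps_within => z; rewrite /= in_itv /= => /andP[lz zu] e e0.
      have Jz : seg a b z.
        have := deJ l hl; have := deJ u hu; rewrite /seg /= => /andP[_ ub] /andP[al _].
        by rewrite (le_trans al lz) (le_trans zu ub).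
      have [dd dd0 hdd] := gcont k z Jz e e0.
      exists dd => // y; rewrite /= in_itv /= => /andP[ly yu] yz.
      have Jy : seg a b y.
        have := deJ l hl; have := deJ u hu; rewrite /seg /= => /andP[_ ub] /andP[al _].
        by rewrite (le_trans al ly) (le_trans yu ub).
      apply: le_lt_trans (hdd y Jy yz); rewrite /ph.
      by apply: le_trans (ler_dist_dist _ _) _; rewrite opprB addrA subrK.
    have [z zin phz] := IVT lu cont hv.
    move: zin; rewrite in_itv /= => /andP[lz zu].
    have hz : `|z - x0| < de.
      move: hl hu; rewrite !ltr_norml => /andP[h1 h2] /andP[h3 h4].
      apply/andP; split; clear -h1 h2 h3 h4 lz zu; lra.
    by case: (dich z hz); rewrite phz; clear -r0; lra.
  have hx1 : `|x1 - x0| < de by case/andP: x1d.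
  case: (leP x x1) => xx1.
    apply: (key x x1 xx1 hx hx1); apply/andP; split.
      by rewrite ge_min; apply/orP; right; clear -ph1 r0; lra.
    by rewrite le_max hge.
  apply: (key x1 x (ltW xx1) hx1 hx); apply/andP; split.
    by rewrite ge_min; apply/orP; left; clear -ph1 r0; lra.
  by rewrite le_max hge orbT.
have Fapprox : forall i e, 0 < e -> exists2 d, 0 < d & forall x, 0 < `|x - x0| < d ->
    `|g x (s1^-1 i)%g - A i x| < e * `|x - x0|.
  move=> i e e0.
  have e'0 : 0 < Num.min e 1 by rewrite lt_min e0 ltr01.
  have [de' de'0 hde'] := approx _ e'0.
  exists (Num.min de de'); first by rewrite lt_min de0 de'0.
  move=> x /andP[x1' x2']; move: x2'; rewrite lt_min => /andP[xde xde'].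
  have Jx : a <= x <= b by apply: deJ.
  have xd' : 0 < `|x - x0| < de' by rewrite x1' xde'.
  have [s hs] := hde' x Jx xd'.
  set k := (s1^-1 i)%g.
  have hs' : `|g x k - A (s k) x| < `|x - x0|.
    apply: lt_le_trans (hs k) _; apply: ler_piMl; [exact: normr_ge0 | by rewrite ge_min lexx orbT].
  have hxx : 0 < `|x - x0| < de by rewrite x1' xde.
  have n1 := near_cl x hxx s k hs'.
  have n2 := claim k x xde; rewrite /k permKV in n2.
  have eqA : A (s k) = A i.
    apply: hstr; apply/eqP; apply/negP => /negP ne.
    have := rgap _ _ ne.
    have := ler_distD (g x k) (A (s k) x0) (A i x0).
    rewrite (distrC (A (s k) x0) (g x k)) => t1 t2.
    have t3 := le_trans t2 t1.
    have : r < r / 4 + r / 2 by apply: le_lt_trans t3 _; apply: ltrD.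
    clear -r0; lra.
  rewrite -eqA; apply: lt_le_trans (hs k) _; apply: ler_wpM2r; first exact: normr_ge0.
  by rewrite ge_min lexx.
have F0 : forall i, g x0 (s1^-1 i)%g = A i x0.
  move=> i; apply/eqP; rewrite -subr_eq0; apply/eqP; apply: zero_of_small => eps eps0.
  set k := (s1^-1 i)%g.
  have eps30 : 0 < eps / 3 by rewrite divr_gt0.
  have [dc dc0 hdc] := gcont k x0 Jx0 _ eps30.
  have [dd dd0 hdd] := Fapprox i 1 ltr01.
  pose t := Num.min (Num.min dc dd) (Num.min de (eps / (3 * (K + 1)))) / 2.
  have m0 : 0 < Num.min (Num.min dc dd) (Num.min de (eps / (3 * (K + 1)))).
    by rewrite !lt_min dc0 dd0 de0 divr_gt0 // mulr_gt0.
  have t0 : 0 < t by rewrite divr_gt0.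
  have tm : t < Num.min (Num.min dc dd) (Num.min de (eps / (3 * (K + 1)))).
    by rewrite /t; clear -m0; lra.
  move: tm; rewrite !lt_min => /andP[/andP[tdc tdd] /andP[tde teps]].
  pose x := x0 + t.
  have hxt : `|x - x0| = t by rewrite /x addrAC subrr add0r gtr0_norm.
  have Jx : seg a b x by apply: deJ; rewrite hxt.
  have h1 : `|g x k - g x0 k| < eps / 3 by apply: hdc => //; rewrite hxt.
  have h2 : `|g x k - A i x| < 1 * `|x - x0| by apply: hdd; rewrite hxt t0.
  have h3 := Alip i x.
  rewrite hxt mul1r in h2; rewrite hxt in h3.
  have tK : (K + 1) * t <= eps / 3.
    rewrite mulrC -ler_pdivlMr //; apply: (le_trans (ltW teps)).
    by rewrite invfM mulrA lexx.
  have e1 := ler_distD (g x k) (g x0 k) (A i x0).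
  have e2 := ler_distD (A i x) (g x k) (A i x0).
  rewrite (distrC (g x0 k) (g x k)) in e1.
  have : `|g x0 k - A i x0| < eps / 3 + (t + K * t).
    apply: le_lt_trans e1 _; apply: ltr_leD => //.
    apply: le_trans e2 _; apply: lerD => //; exact: ltW.
  move=> h; apply: lt_le_trans h _.
  move: tK; clear -eps0; lra.
exists (fun i x => g x (s1^-1 i)%g); split.
- move=> i; apply: eps_within => z; rewrite /= in_itv /= => Jz e e0.
  have [dd dd0 hdd] := gcont (s1^-1 i)%g z Jz e e0.
  by exists dd => // y; rewrite /= in_itv /= => Jy; apply: hdd.
- move=> x Jx; have [p _ hp] := gpw x Jx.
  by exists (s1^-1 * p)%g => i; rewrite hp permM.
- move=> i; apply: (@deriv_from R n _ x0 (cv i).1 (cv i).2).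
    move=> e e0; have [dd dd0 hdd] := Fapprox i e e0.
    by exists dd => // x hx; rewrite -hcv; apply: hdd.
  by rewrite F0 hcv.
Qed.
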